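(* Let $\boldsymbol{A}$ be the adjacency matrix of an undirected graph without self-loops on a finite vertex set $\boldsymbol{V}=\{1,\dots,N\}$. Let $\mathcal{R}_e\subset\boldsymbol{V}$ be a nonempty set of egos and $\mathcal{R}_a\subset\boldsymbol{V}\setminus\mathcal{R}_e$ a nonempty set of alters, $n_a=|\mathcal{R}_a|$, each alter $j$ having a unique recruiting ego $e(j)\in\mathcal{R}_e$ with $A_{j\,e(j)}=1$. Let $\widetilde{\boldsymbol{A}}$ have $\widetilde A_{ij}=\widetilde A_{ji}=1$ iff $i\in\mathcal{R}_a$ and $j=e(i)$ (other entries $0$). Let $\boldsymbol{Z}\in\{0,1\}^N$ have independent components with $\Pr(Z_i=1)=p_z\,\mathbb{I}\{i\in\mathcal{R}_e\}$, $p_z\in(0,1)$. Define $F_i=\mathbb{I}\{\sum_{j\neq i}Z_jA_{ij}>0\}$, $\widetilde F_i=\mathbb{I}\{\sum_{j\neq i}Z_j\widetilde A_{ij}>0\}$. Alters $i\in\mathcal{R}_a$ have fixed real potential outcomes $Y_i(0,f)$, $f\in\{0,1\}$, and observed outcome $Y_i=Y_i(0,F_i)$. Let $$IE=\frac1{n_a}\sum_{i\in\mathcal{R}_a}[Y_i(0,1)-Y_i(0,0)],\qquad \widehat{IE}=\frac1{n_a}\sum_{i\in\mathcal{R}_a}\Big[\frac{\mathbb{I}\{\widetilde F_i=1\}Y_i}{p_z}-\frac{\mathbb{I}\{\widetilde F_i=0\}Y_i}{1-p_z}\Big].$$ If $Y_i(0,1)\ge Y_i(0,0)$ for all $i\in\mathcal{R}_a$,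 then $0\le\mathbb{E}_{\boldsymbol{Z}}[\widehat{IE}]\le IE$; if $Y_i(0,1)\le Y_i(0,0)$ for all $i\in\mathcal{R}_a$, then $IE\le\mathbb{E}_{\boldsymbol{Z}}[\widehat{IE}]\le0$.
   Context: Design-based setting: everything except the treatment assignment $\boldsymbol{Z}$ is fixed, and expectations are over $\boldsymbol{Z}$. *)

(* Defs.v *)
From HB Require Import structures.
From mathcomp Require Import all_boot all_order all_algebra.
Set Implicit Arguments. Unset Strict Implicit. Unset Printing Implicit Defensive.
Import Order.TTheory GRing.Theory Num.Theory.
Local Open Scope ring_scope.

(* Vertices are 'I_N (i.e. {0,...,N-1}); treatment assignments are
   Z : {ffun 'I_N -> bool}. *)

Section Defs.
Variables (R : realFieldType) (N : nat).

Definition probZ (pz : R) (Re : {set 'I_N}) (Z : {ffun 'I_N -> bool}) : R :=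
  \prod_(i < N) (if i \in Re then (if Z i then pz else 1 - pz)
                 else (if Z i then 0 else 1)).

Definition EZ (pz : R) (Re : {set 'I_N}) (X : {ffun 'I_N -> bool} -> R) : R :=
  \sum_(Z : {ffun 'I_N -> bool}) probZ pz Re Z * X Z.

Definition exposure (A : 'M[R]_N) (Z : {ffun 'I_N -> bool}) (i : 'I_N) : bool :=
  0 < \sum_(j < N | j != i) (Z j)%:R * A i j.

Definition recruitA (Ra : {set 'I_N}) (e : 'I_N -> 'I_N) : 'M[R]_N :=
  \matrix_(i, j) (if ((i \in Ra) && (j == e i)) || ((j \in Ra) && (i == e j))
                  then 1 else 0).

(* Observed outcome Y_i = Y_i(0, F_i); Y0 i = Y_i(0,0), Y1 i = Y_i(0,1). *)
Definition obsY (A : 'M[R]_N) (Y0 Y1 : 'I_N -> R) (Z : {ffun 'I_N -> bool})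
  (i : 'I_N) : R := if exposure A Z i then Y1 i else Y0 i.

Definition IE (Ra : {set 'I_N}) (Y0 Y1 : 'I_N -> R) : R :=
  (#|Ra|%:R)^-1 * \sum_(i in Ra) (Y1 i - Y0 i).

Definition IEhat (pz : R) (A : 'M[R]_N) (Ra : {set 'I_N}) (e : 'I_N -> 'I_N)
  (Y0 Y1 : 'I_N -> R) (Z : {ffun 'I_N -> bool}) : R :=
  (#|Ra|%:R)^-1 * \sum_(i in Ra)
     ((if exposure (recruitA Ra e) Z i then 1 else 0) * obsY A Y0 Y1 Z i / pz
      - (if ~~ exposure (recruitA Ra e) Z i then 1 else 0) * obsY A Y0 Y1 Z i
          / (1 - pz)).

End Defs.

(* Main.v *)
Require Import Defs.
From HB Require Import structures.
From mathcomp Require Import all_boot all_order all_algebra.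
From mathcomp Require Import ring lra.
Import Order.TTheory GRing.Theory Num.Theory.
Local Open Scope ring_scope.

Section Helpers.
Local Set Implicit Arguments.
Variables (R : realFieldType) (N : nat).

Definition wZ (pz : R) (Re : {set 'I_N}) (i : 'I_N) (b : bool) : R :=
  if i \in Re then (if b then pz else 1 - pz) else (if b then 0 else 1).

Lemma EZ_single pz Re k (g : bool -> R) :
  EZ pz Re (fun Z => g (Z k)) = wZ pz Re k true * g true + wZ pz Re k false * g false.
Proof.
rewrite /EZ.
transitivity (\sum_(Z : {ffun 'I_N -> bool})
   \prod_(i < N) (wZ pz Re i (Z i) * (if i == k then g (Z i) else 1))).
  apply: eq_bigr => Z _; rewrite big_split /=; congr (_ * _).
  by rewrite -big_mkcond big_pred1_eq.
rewrite -(bigA_distr_bigA (fun i b => wZ pz Re i b * (if i == k then g b else 1))).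
rewrite (bigD1 k) //= big_bool /= !eqxx big1 ?mulr1 // => i ik.
rewrite big_bool /= (negbTE ik) !mulr1 /wZ; case: (i \in Re) => //; lra.
Qed.

Lemma EZ_ext pz Re (X Y : {ffun 'I_N -> bool} -> R) :
  (forall Z, X Z = Y Z) -> EZ pz Re X = EZ pz Re Y.
Proof. by move=> h; apply: eq_bigr => Z _; rewrite h. Qed.

Lemma EZ_add pz Re (X Y : {ffun 'I_N -> bool} -> R) :
  EZ pz Re (fun Z => X Z + Y Z) = EZ pz Re X + EZ pz Re Y.
Proof. by rewrite /EZ -big_split; apply: eq_bigr => Z _; rewrite mulrDr. Qed.

Lemma EZ_scale pz Re c (X : {ffun 'I_N -> bool} -> R) :
  EZ pz Re (fun Z => c * X Z) = c * EZ pz Re X.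
Proof. by rewrite /EZ mulr_sumr; apply: eq_bigr => Z _; rewrite mulrCA. Qed.

Lemma probZ_ge0 (pz : R) (Re : {set 'I_N}) (Z : {ffun 'I_N -> bool}) : 0 < pz < 1 -> 0 <= probZ pz Re Z.
Proof.
move=> /andP[h0 h1]; apply: prodr_ge0 => i _.
case: (i \in Re); case: (Z i) => //; lra.
Qed.

Lemma EZ_le pz Re (X Y : {ffun 'I_N -> bool} -> R) : 0 < pz < 1 ->
  (forall Z, X Z <= Y Z) -> EZ pz Re X <= EZ pz Re Y.
Proof.
move=> hp h; apply: ler_sum => Z _; apply: ler_wpM2l; first exact: probZ_ge0.
exact: h.
Qed.

End Helpers.

Section Exposure.
Local Set Implicit Arguments.
Variables (R : realFieldType) (N : nat).

Lemma exposure_recruit (Re Ra : {set 'I_N}) (e : 'I_N -> 'I_N) Z i :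
  [disjoint Ra & Re] -> (forall j, j \in Ra -> e j \in Re) -> i \in Ra ->
  exposure (recruitA R Ra e) Z i = Z (e i).
Proof.
move=> dis he iRa.
have iRe : i \in Re = false by rewrite (disjointFr dis iRa).
have ei : e i != i by apply/eqP => h; move: (he _ iRa); rewrite h iRe.
rewrite /exposure (bigD1 (e i)) //= big1 ?addr0.
  rewrite mxE iRa eqxx /= mulr1; by case: (Z (e i)); rewrite ?ltr01 ?ltxx.
move=> j /andP[ji jei]; rewrite mxE iRa (negbTE jei) /=.
case jRa: (j \in Ra) => /=; last by rewrite mulr0.
case: eqP => [h|_]; last by rewrite mulr0.
by move: (he _ jRa); rewrite -h iRe.
Qed.

Lemma exposure_A (A : 'M[R]_N) (Z : {ffun 'I_N -> bool}) i k :
  (forall i j, A i j = 0 \/ A i j = 1) -> A i k = 1 -> k != i -> Z k ->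
  exposure A Z i.
Proof.
move=> A01 Ak ki Zk; rewrite /exposure (bigD1 k) //= Zk Ak mulr1.
have : 0 <= \sum_(j < N | (j != i) && (j != k)) (Z j)%:R * A i j.
  apply: sumr_ge0 => j _; apply: mulr_ge0 => //; by case: (A01 i j) => ->.
move=> h; rewrite ltr_pwDl //.
Qed.

End Exposure.

Theorem mainTheorem4 (R : realFieldType) (N : nat) (A : 'M[R]_N)
  (Re Ra : {set 'I_N}) (e : 'I_N -> 'I_N) (pz : R) (Y0 Y1 : 'I_N -> R) :
  (forall i j, A i j = 0 \/ A i j = 1) ->
  (forall i j, A i j = A j i) ->
  (forall i, A i i = 0) ->
  Re != set0 -> Ra != set0 -> [disjoint Ra & Re] ->
  (forall j, j \in Ra -> e j \in Re /\ A j (e j) = 1) ->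
  0 < pz < 1 ->
  ((forall i, i \in Ra -> Y0 i <= Y1 i) ->
     0 <= EZ pz Re (IEhat pz A Ra e Y0 Y1) <= IE Ra Y0 Y1) /\
  ((forall i, i \in Ra -> Y1 i <= Y0 i) ->
     IE Ra Y0 Y1 <= EZ pz Re (IEhat pz A Ra e Y0 Y1) <= 0).
Proof.
move=> A01 Asym Adiag Re0 Ra0 dis he hp.
have hp' := hp; move/andP: hp' => [p0 p1].
have pz0 : pz != 0 by rewrite gt_eqF.
have qz0 : 1 - pz != 0 by rewrite gt_eqF // subr_gt0.
have he1 j : j \in Ra -> e j \in Re by move=> /he[].
pose t i Z := ((if exposure (recruitA R Ra e) Z i then 1 else 0) * obsY A Y0 Y1 Z i / pz
      - (if ~~ exposure (recruitA R Ra e) Z i then 1 else 0) * obsY A Y0 Y1 Z i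
          / (1 - pz)).
have key i : i \in Ra -> exists c, [/\ 0 <= c, c <= 1 &
   EZ pz Re (t i) = (Y1 i - Y0 i) * c].
  move=> iRa.
  have [eRe Aie] := he i iRa.
  have ei : e i != i by apply/eqP => h; move: eRe; rewrite h (disjointFr dis iRa).
  pose h (Z : {ffun 'I_N -> bool}) := ((~~ Z (e i))%:R * (exposure A Z i)%:R : R).
  pose x := EZ pz Re h.
  have E1 : EZ pz Re (fun Z : {ffun 'I_N -> bool} => ((Z (e i))%:R : R)) = pz.
    by rewrite (@EZ_single R N pz Re (e i) (fun b => (b%:R : R))) /wZ eRe /=; ring.
  have E2 : EZ pz Re (fun Z : {ffun 'I_N -> bool} => ((~~ Z (e i))%:R : R)) = 1 - pz.
    by rewrite (@EZ_single R N pz Re (e i) (fun b => ((~~ b)%:R : R))) /wZ eRe /=; ring.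
  have x0 : 0 <= x.
    apply: sumr_ge0 => Z _; apply: mulr_ge0; first exact: probZ_ge0.
    by rewrite /h; case: (Z (e i)); case: (exposure A Z i) => /=; rewrite ?mulr0 ?mul0r ?mulr1 ?ler01.
  have x1 : x <= 1 - pz.
    rewrite -E2; apply: EZ_le => // Z; rewrite /h.
    by case: (Z (e i)); case: (exposure A Z i) => /=; rewrite ?mulr0 ?mul0r ?mulr1 ?lexx ?ler01.
  exists (1 - x / (1 - pz)); split.
  - rewrite subr_ge0 ler_pdivrMr ?subr_gt0 // mul1r //.
  - rewrite lerBlDr lerDl divr_ge0 // subr_ge0 ltW //.
  rewrite (@EZ_ext R N pz Re (t i) (fun Z : {ffun 'I_N -> bool} => Y1 i / pz * (Z (e i))%:R +
      ((- (Y0 i / (1 - pz))) * (~~ Z (e i))%:R + (- ((Y1 i - Y0 i) / (1 - pz))) * h Z))).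
    rewrite !EZ_add !EZ_scale E1 E2 -/x; field; rewrite ?pz0 ?qz0 //.
  move=> Z; rewrite /t /h (@exposure_recruit R N Re Ra e Z i dis he1 iRa) /obsY.
  case hz: (Z (e i)) => /=.
    rewrite (@exposure_A R N A Z i (e i) A01 Aie ei hz) /=; ring.
  case: (exposure A Z i) => /=; ring.
have n0 : 0 < (#|Ra|%:R : R) by rewrite ltr0n card_gt0.
have EIE : EZ pz Re (IEhat pz A Ra e Y0 Y1) =
   (#|Ra|%:R)^-1 * \sum_(i in Ra) EZ pz Re (t i).
  rewrite /IEhat EZ_scale; congr (_ * _).
  rewrite /EZ; under eq_bigr do rewrite mulr_sumr.
  by rewrite exchange_big.
rewrite EIE /IE; split => hY; apply/andP; split.
- apply: mulr_ge0; first by rewrite invr_ge0 ltW.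
  apply: sumr_ge0 => i iRa; have [c [c0 c1 ->]] := key i iRa.
  by apply: mulr_ge0 => //; rewrite subr_ge0 hY.
- apply: ler_wpM2l; first by rewrite invr_ge0 ltW.
  apply: ler_sum => i iRa; have [c [c0 c1 ->]] := key i iRa.
  have := hY i iRa; nra.
- apply: ler_wpM2l; first by rewrite invr_ge0 ltW.
  apply: ler_sum => i iRa; have [c [c0 c1 ->]] := key i iRa.
  have := hY i iRa; nra.
- apply: mulr_ge0_le0; first by rewrite invr_ge0 ltW.
  apply: sumr_le0 => i iRa; have [c [c0 c1 ->]] := key i iRa.
  have := hY i iRa; nra.
Qed.
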